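(* Let $\mathcal{A}$ be a category of cubes. The following conditions are equivalent: (1) $\mathcal{A}$ is shell-complete; (2) for any $p,q\geq 2$ and any map of $\mathcal A$-sets $x:\partial\mathcal{A}[p]\to\mathcal{A}[q]$, the set map $x_0:[p]\to[q]$ belongs to $\mathcal{A}$; (3) for any $p,q\geq2$, any map of $\mathcal A$-sets $x:\partial\mathcal{A}[p]\to\mathcal{A}[q]$ factors uniquely as a composite $\partial\mathcal{A}[p]\subset\mathcal{A}[p]\to\mathcal{A}[q]$.
   Context: $[0]=\{()\}$, $[n]=\{0,1\}^n$ ($n\ge1$) with the product order; ${\rm PoSet}$ is posets with strictly increasing maps. Face maps $\delta_i^\alpha:[n-1]\to[n]$ insert $\alpha\in\{0,1\}$ at position $i$; $\square$ is the subcategory of ${\rm PoSet}$ with objects $[n]$ generated by face maps. A map $[m]\to[n]$ is adjacency-preserving if strictly increasing and sends pairs at Hamming distance $1$ to pairs at Hamming distance $1$. A category of cubes is a subcategory $\mathcal A\subset{\rm PoSet}$ with objects $\{[n]:n\ge0\}$, containing $\square$, whose morphisms are adjacency-preserving. An $\mathcal A$-set is a presheaf on $\mathcal A$; $\mathcal A[p]=\mathcal A(-,[p])$; $\partial\mathcal A[p]$ is the subpresheaf of $\mathcal A[p]$ with the same $k$-cubes for $k<p$ and none in dimensions $\ge p$. For a map $x$ of $\mathcal A$-sets from $\partial\mathcal A[p]$ (or $\mathcal A[p]$) to $\mathcal A[q]$, $x_0$ is its component in dimension $0$, viewed via $\mathcal A([0],[n])\cong[n]$ as a set map $[p]\to[q]$.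 $\mathrm{cosk}_1^{\mathcal A}$ is the right adjoint of the truncation $K\mapsto K_{\le1}$ from $\mathcal A$-sets to presheaves on the full subcategory on $[0],[1]$. $\mathcal A$ is shell-complete if for every $p\ge2$ the canonical map $\mathcal A[p]\to\mathrm{cosk}_1^{\mathcal A}(\mathcal A[p]_{\le1})$ (adjoint to the identity) is an isomorphism. *)

(* Defs.v *)
From mathcomp Require Import all_boot.
Set Implicit Arguments. Unset Strict Implicit. Unset Printing Implicit Defensive.

(* [n] = {0,1}^n ; [0] is the one-point set {()} (the unique ffun on 'I_0). *)
Definition cube (n : nat) := {ffun 'I_n -> bool}.

Definition cle n (x y : cube n) : bool := [forall i, x i ==> y i].
Definition clt n (x y : cube n) : bool := cle x y && (x != y).

(* set maps [m] -> [n] (finite functions, so equality is extensional) *)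
Definition cmap (m n : nat) := {ffun cube m -> cube n}.
Definition cid n : cmap n n := [ffun x => x].
Definition comp m n k (g : cmap n k) (f : cmap m n) : cmap m k :=
  [ffun x => g (f x)].

Definition strict_incr m n (f : cmap m n) : Prop :=
  forall x y : cube m, clt x y -> clt (f x) (f y).

Definition hamming n (x y : cube n) : nat := #|[set i | x i != y i]|.

Definition adj_preserving m n (f : cmap m n) : Prop :=
  strict_incr f /\
  forall x y : cube m, hamming x y = 1 -> hamming (f x) (f y) = 1.

(* face map delta_i^a : [n] -> [n+1] inserting a at position i *)
Definition face n (i : 'I_n.+1) (a : bool) : cmap n n.+1 :=
  [ffun x : cube n => [ffun j : 'I_n.+1 =>
     match unlift i j with Some j' => x j' | None => a end]].

(* the morphisms of the subcategory [square] generated by the face maps *)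
Inductive in_square : forall m n, cmap m n -> Prop :=
| sq_id n : in_square (cid n)
| sq_face m n (i : 'I_n.+1) (a : bool) (f : cmap m n) :
    in_square f -> in_square (comp (face i a) f).

(* a category of cubes: a subcategory of PoSet on the objects [n], n >= 0,
   containing [square], all of whose morphisms are adjacency-preserving *)
Record cat_cubes := CatCubes {
  amem : forall m n, cmap m n -> Prop;
  amem_id : forall n, amem (cid n);
  amem_comp : forall m n k (g : cmap n k) (f : cmap m n),
      amem g -> amem f -> amem (comp g f);
  amem_square : forall m n (f : cmap m n), in_square f -> amem f;
  amem_adj : forall m n (f : cmap m n), amem f -> adj_preserving f }.

Definition Amor (A : cat_cubes) m n := {f : cmap m n | amem A f}.

Definition Acomp (A : cat_cubes) j k n (f : Amor A k n) (g : Amor A j k)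
  : Amor A j n :=
  exist _ (comp (sval f) (sval g)) (amem_comp (svalP f) (svalP g)).

(* Natural families between the representables A[n] and A[p], restricted to
   the dimensions k satisfying S.  With S = predT these are the maps of
   A-sets A[n] -> A[p]; with S = (< p) (and n = p) these are the maps of
   A-sets dA[p] -> A[q] (the k-cubes of dA[p] are A([k],[p]) for k < p and
   none otherwise); with S = (<= 1) these are the maps of truncated
   presheaves A[n]_{<=1} -> A[p]_{<=1}. *)
Definition nat_fam (A : cat_cubes) (S : pred nat) n p :=
  { x : forall k, S k -> Amor A k n -> Amor A k p |
    forall j k (Sj : S j) (Sk : S k) (g : Amor A j k) (f : Amor A k n),
      sval (x j Sj (Acomp f g)) = comp (sval (x k Sk f)) (sval g) }.

Definition fam_app A S n p (x : nat_fam A S n p) k (Sk : S k) (f : Amor A k n)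
  : cmap k p := sval (sval x k Sk f).

(* Shell-completeness: for p >= 2 the unit A[p] -> cosk_1(A[p]_{<=1}) is an
   iso, i.e. in each dimension n the map sending f : [n] -> [p] to the
   truncated natural map (g |-> f o g) (g in A([k],[n]), k <= 1) is a
   bijection onto the natural maps A[n]_{<=1} -> A[p]_{<=1}
   ( = cosk_1(A[p]_{<=1})_n ). *)
Definition shell_complete (A : cat_cubes) : Prop :=
  forall p, 2 <= p -> forall n,
    (forall f g : Amor A n p,
       (forall k (Sk : k <= 1) (h : Amor A k n),
          comp (sval f) (sval h) = comp (sval g) (sval h)) ->
       sval f = sval g) /\
    (forall T : nat_fam A (fun k => k <= 1) n p,
       exists f : Amor A n p,
         forall k (Sk : k <= 1) (h : Amor A k n),
           fam_app T Sk h = comp (sval f) (sval h)).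

Definition pt : cube 0 := [ffun i => false].
Definition vertex_map n (v : cube n) : cmap 0 n := [ffun _ => v].

Lemma cube0_eq (x y : cube 0) : x = y.
Proof. by apply/ffunP => -[]. Qed.

Lemma vertex_square n (v : cube n) : in_square (vertex_map v).
Proof.
elim: n v => [|n IH] v.
  have -> : vertex_map v = cid 0.
    by apply/ffunP => x; rewrite !ffunE (cube0_eq v x).
  exact: sq_id.
pose v' : cube n := [ffun j => v (lift ord_max j)].
have -> : vertex_map v = comp (face ord_max (v ord_max)) (vertex_map v').
  apply/ffunP => x; rewrite !ffunE; apply/ffunP => j; rewrite !ffunE.
  by case: unliftP => [j'|] ->; rewrite ?ffunE.
exact/sq_face/IH.
Qed.

Definition vertex (A : cat_cubes) n (v : cube n) : Amor A 0 n :=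
  exist _ (vertex_map v) (amem_square A (vertex_square v)).

(* x_0 : [p] -> [q] for a map x : dA[p] -> A[q] (p > 0), via A([0],[n]) ~ [n] *)
Definition x0 (A : cat_cubes) p q (Hp : 0 < p)
  (x : nat_fam A (fun k => k < p) p q) : cmap p q :=
  [ffun v => fam_app x Hp (vertex A v) pt].

Definition restricts_to (A : cat_cubes) p q
  (y : nat_fam A predT p q) (x : nat_fam A (fun k => k < p) p q) : Prop :=
  forall k (Sk : k < p) (f : Amor A k p),
    fam_app y (isT : predT k) f = fam_app x Sk f.

Definition fam_eq A S n p (x y : nat_fam A S n p) : Prop :=
  forall k (Sk : S k) f, fam_app x Sk f = fam_app y Sk f.

Lemma ltn0_of_2 p : 2 <= p -> 0 < p.
Proof. by case: p. Qed.

Definition cond2 (A : cat_cubes) : Prop :=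
  forall p q (Hp : 2 <= p), 2 <= q ->
  forall x : nat_fam A (fun k => k < p) p q, amem A (x0 (ltn0_of_2 Hp) x).

Definition cond3 (A : cat_cubes) : Prop :=
  forall p q, 2 <= p -> 2 <= q ->
  forall x : nat_fam A (fun k => k < p) p q,
    exists y : nat_fam A predT p q,
      restricts_to y x /\
      forall y' : nat_fam A predT p q, restricts_to y' x -> fam_eq y y'.

(* Main.v *)
From Pilot Require Import Defs.
From Stdlib Require Import ProofIrrelevance.
From mathcomp Require Import all_boot.
Import Pilot.Defs.
Set Implicit Arguments. Unset Strict Implicit.

Lemma Amor_eq (A : cat_cubes) m n (f g : Amor A m n) : sval f = sval g -> f = g.
Proof. case: f g => f Pf [g Pg] /= E; subst g; by rewrite (proof_irrelevance _ Pf Pg). Qed.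

Lemma comp_vertex m n (f : cmap m n) v : comp f (vertex_map v) = vertex_map (f v).
Proof. by apply/ffunP => w; rewrite !ffunE. Qed.

Lemma Acomp_vertex (A : cat_cubes) k n (f : Amor A k n) v :
  Acomp f (vertex A v) = vertex A (sval f v).
Proof. by apply: Amor_eq; rewrite /= comp_vertex. Qed.

Lemma fam_app_irr (A : cat_cubes) S n p (x : nat_fam A S n p) k (S1 S2 : S k) f :
  fam_app x S1 f = fam_app x S2 f.
Proof. by rewrite (proof_irrelevance _ S1 S2). Qed.

Lemma fam_vert (A : cat_cubes) S n p (x : nat_fam A S n p) (S0 : S 0) k (Sk : S k)
  (f : Amor A k n) v :
  fam_app x Sk f v = fam_app x S0 (vertex A (sval f v)) pt.
Proof.
have := svalP x 0 k S0 Sk (vertex A v) f.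
rewrite Acomp_vertex => E.
by rewrite /fam_app E !ffunE.
Qed.

Definition base (A : cat_cubes) S n p (x : nat_fam A S n p) (S0 : S 0) : cmap n p :=
  [ffun v => fam_app x S0 (vertex A v) pt].

Lemma fam_base (A : cat_cubes) S n p (x : nat_fam A S n p) (S0 : S 0) k (Sk : S k)
  (f : Amor A k n) : fam_app x Sk f = comp (base x S0) (sval f).
Proof. by apply/ffunP => v; rewrite !ffunE; exact: fam_vert. Qed.

Definition mkfam (A : cat_cubes) (S : pred nat) n p (F : cmap n p)
  (P : forall k, S k -> forall f : Amor A k n, amem A (comp F (sval f))) :
  nat_fam A S n p.
Proof.
refine (exist _ (fun k Sk f => exist _ (comp F (sval f)) (P k Sk f)) _).
move=> j k Sj Sk g f /=.
by apply/ffunP => v; rewrite !ffunE.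
Defined.

Lemma comp_cid m n (F : cmap m n) : comp F (cid m) = F.
Proof. by apply/ffunP => w; rewrite !ffunE. Qed.

Lemma ext_vertex (A : cat_cubes) (H2 : cond2 A) p (Hp : 2 <= p) n (F : cmap n p) :
  (forall h : Amor A 1 n, amem A (comp F (sval h))) -> amem A F.
Proof.
move: n F; elim/ltn_ind => n IH F HF.
case: n IH F HF => [|[|n]] IH F HF.
- have -> : F = vertex_map (F pt).
    by apply/ffunP => w; rewrite ffunE (cube0_eq w pt).
  exact: amem_square (vertex_square _).
- have := HF (exist _ (cid 1) (amem_id A 1)).
  by rewrite /= comp_cid.
- have P : forall k, (fun k => k < n.+2) k ->
      forall g : Amor A k n.+2, amem A (comp F (sval g)).
    move=> k Hk g; apply: (IH k Hk) => h.
    have -> : comp (comp F (sval g)) (sval h) = comp F (sval (Acomp g h)).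
      by apply/ffunP => w; rewrite /= !ffunE.
    exact: HF.
  have := H2 n.+2 p isT Hp (mkfam P).
  have -> : x0 (ltn0_of_2 (isT : 2 <= n.+2)) (mkfam P) = F.
    by apply/ffunP => v; rewrite !ffunE /fam_app /=.
  done.
Qed.

Theorem theorem7p4 (A : cat_cubes) :
  (shell_complete A <-> cond2 A) /\ (cond2 A <-> cond3 A).
Proof.
split; split.
- move=> Hsh p q Hp Hq x.
  set F := x0 _ x.
  have HF k (Sk : k < p) f : fam_app x Sk f = comp F (sval f)
    := fam_base x (ltn0_of_2 Hp) Sk f.
  have P : forall k, k <= 1 -> forall h : Amor A k p, amem A (comp F (sval h)).
    move=> k Hk h; have Sk : k < p by apply: leq_ltn_trans Hk Hp.
    rewrite -(HF k Sk h); exact: svalP.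
  have [_ Hs] := Hsh q Hq p.
  have [f Hf] := Hs (mkfam P).
  have -> : F = sval f.
    apply/ffunP => v; have := Hf 0 isT (vertex A v).
    by rewrite /fam_app /= => /ffunP/(_ pt); rewrite !ffunE.
  exact: svalP f.
- move=> H2 p Hp n; split.
  + move=> f g Hfg; apply/ffunP => v; have := Hfg 0 isT (vertex A v).
    by rewrite /= => /ffunP/(_ pt); rewrite !ffunE.
  + move=> T.
    have S0 : 0 <= 1 by [].
    have HT := fam_base T S0.
    have Hb : amem A (base T S0).
      apply: (ext_vertex H2 Hp) => h.
      rewrite -(HT 1 isT h); exact: svalP.
    by exists (exist _ _ Hb) => k Sk h; exact: HT.
- move=> H2 p q Hp Hq x.
  have HA := H2 p q Hp Hq x.
  set F := x0 _ x in HA.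
  have HF k (Sk : k < p) f : fam_app x Sk f = comp F (sval f)
    := fam_base x (ltn0_of_2 Hp) Sk f.
  have P : forall k, predT k -> forall f : Amor A k p, amem A (comp F (sval f)).
    by move=> k _ f; exact: amem_comp HA (svalP f).
  exists (mkfam P); split.
  + by move=> k Sk f; rewrite HF.
  + move=> y' Hy' k Sk f.
    rewrite (fam_base y' (isT : predT 0)).
    rewrite (_ : base y' isT = F) //.
    apply/ffunP => v; rewrite !ffunE.
    rewrite -(Hy' 0 (ltn0_of_2 Hp)). done.
- move=> H3 p q Hp Hq x.
  have [y [Hy _]] := H3 p q Hp Hq x.
  have Hb : base y (isT : predT 0) = x0 (ltn0_of_2 Hp) x.
    by apply/ffunP => v; rewrite !ffunE -(Hy 0 (ltn0_of_2 Hp)).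
  rewrite -Hb.
  have E := fam_base y (isT : predT 0) (isT : predT p) (exist _ (cid p) (amem_id A p)).
  have : amem A (fam_app y (isT : predT p) (exist _ (cid p) (amem_id A p))) by exact: svalP.
  by rewrite E /= comp_cid.
Qed.
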